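(* Let $G$ be a finite group and let $\{M_1,\dots,M_t\}$ be a maximal irredundant family of maximal subgroups of $G$. Then $\mathrm{core}_G(M_1\cap\dots\cap M_t)=\Phi(G)$, where $\Phi(G)$ is the Frattini subgroup of $G$ and $\mathrm{core}_G(X)$ is the largest normal subgroup of $G$ contained in $X$.
   Context: A set $\mathcal X$ of maximal subgroups of $G$ is irredundant if the intersection of the members of $\mathcal X$ is not equal to the intersection of the members of any proper subset of $\mathcal X$. An irredundant set is maximal irredundant if it is not properly contained in any other irredundant set of maximal subgroups of $G$. *)

(* Defs.v *)
From mathcomp Require Import all_boot all_fingroup all_solvable.
Set Implicit Arguments. Unset Strict Implicit. Unset Printing Implicit Defensive.
Local Open Scope group_scope.

(* Intersection of a family X of subsets of G, taken inside G
   (so the empty family has intersection G). *)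
Definition famcap (gT : finGroupType) (G : {set gT}) (X : {set {set gT}}) : {set gT} :=
  G :&: \bigcap_(M in X) M.

Definition irredundant (gT : finGroupType) (G : {set gT}) (X : {set {set gT}}) : Prop :=
  (forall M, M \in X -> maximal M G) /\
  (forall Y : {set {set gT}}, Y \proper X -> famcap G Y != famcap G X).

Definition max_irredundant (gT : finGroupType) (G : {set gT}) (X : {set {set gT}}) : Prop :=
  irredundant G X /\
  (forall Z : {set {set gT}}, X \proper Z -> ~ irredundant G Z).

(* Main.v *)
Require Import Defs.
From mathcomp Require Import all_boot all_fingroup all_solvable.
Local Open Scope group_scope.
Set Implicit Arguments. Unset Strict Implicit.

Section Aux.
Variable gT : finGroupType.
Implicit Types (G : {group gT}) (Y : {set {set gT}}).

Lemma famcapP (G : {set gT}) Y x :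
  reflect (x \in G /\ forall M, M \in Y -> x \in M) (x \in famcap G Y).
Proof.
rewrite /famcap inE; apply: (iffP andP) => [[xG /bigcapP H]|[xG H]].
  by split.
by split=> //; apply/bigcapP.
Qed.

Lemma famcapS (G : {set gT}) Y Y' : Y \subset Y' -> famcap G Y' \subset famcap G Y.
Proof.
move=> sYY'; apply/subsetP=> x /famcapP [xG H]; apply/famcapP; split=> //.
by move=> M MY; apply: H; apply: (subsetP sYY').
Qed.

Lemma famcap_subG (G : {set gT}) Y : famcap G Y \subset G.
Proof. by apply/subsetP=> x /famcapP[]. Qed.

Lemma max_group {M G : {set gT}} : maximal M G -> group_set M.
Proof. by case/maxsetP => /andP[]. Qed.

Lemma famcapM G Y x y : (forall M, M \in Y -> maximal M G) ->
  x \in famcap G Y -> y \in famcap G Y -> x * y \in famcap G Y.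
Proof.
move=> mY /famcapP[xG Hx] /famcapP[yG Hy]; apply/famcapP; split; first exact: groupM.
move=> M MY; have gM := max_group (mY M MY).
exact: (groupM (G := Group gM)) (Hx M MY) (Hy M MY).
Qed.

Lemma famcapV G Y x : (forall M, M \in Y -> maximal M G) ->
  x \in famcap G Y -> x^-1 \in famcap G Y.
Proof.
move=> mY /famcapP[xG Hx]; apply/famcapP; split; first by rewrite groupV.
move=> M MY; have gM := max_group (mY M MY).
have : x \in Group gM := Hx M MY.
by rewrite -groupV.
Qed.

End Aux.

Theorem mainTheorem2 (gT : finGroupType) (G : {group gT}) (X : {set {set gT}}) :
  max_irredundant G X -> gcore (famcap G X) G = 'Phi(G).
Proof.
move=> [[mX irrX] maxX].
set D := famcap G X; set N := gcore D G.
have sNG : N \subset G by apply: subset_trans (gcore_sub D G) (famcap_subG G X).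
have nNG : G \subset 'N(N) by apply: gcore_norm.
apply/eqP; rewrite eqEsubset; apply/andP; split; last first.
  apply: gcore_max; last by case/andP: (Phi_normal G).
  apply/subsetP=> x xP; apply/famcapP; split; first exact: (subsetP (Phi_sub G)).
  move=> M MX; have gM := max_group (mX M MX).
  by have := Phi_sub_max (M := Group gM) (mX M MX) => /subsetP; apply.
apply/bigcapsP=> M; rewrite /maximal_eq; case/predU1P=> [-> //|maxM].
apply/idPn=> nNM.
have sNM_of : D \subset M -> N \subset M.
  by move=> sDM; apply: subset_trans (gcore_sub _ _) sDM.
have MnX : (M : {set gT}) \notin X.
  by apply: contra nNM => MX; apply: sNM_of; apply/subsetP=> x /famcapP[_]; apply.
set Z := (M : {set gT}) |: X.
have pXZ : X \proper Z.
  rewrite properEneq subsetUr andbT; apply: contraNneq MnX => ->.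
  by rewrite setU11.
have mZ : forall K, K \in Z -> maximal K G.
  by move=> K; rewrite in_setU1 => /predU1P[->|]; [exact: maxM | exact: mX].
have [Y /andP[pYZ /eqP eY]] :
    exists Y : {set {set gT}}, (Y \proper Z) && (famcap G Y == famcap G Z).
  apply/existsP; apply: contraT => H; exfalso; apply: (maxX Z pXZ); split=> // Y pY.
  by apply: contraNneq H => eq; apply/existsP; exists Y; rewrite pY eq eqxx.
have GNM : (N * M = G)%g.
  have sMG : M \subset G by apply: proper_sub (maxgroupp maxM).
  have nNM' : M \subset 'N(N) by apply: subset_trans sMG nNG.
  have gD : group_set D.
    apply/group_setP; split; last by move=> x y xD yD; apply: famcapM.
    apply/famcapP; split=> // K KX; have gK := max_group (mX K KX).
    exact: (group1 (Group gK)).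
  pose NG := gcore_group (Group gD) G.
  have eK : NG <*> M = N * M by apply: norm_joinEr.
  have gNM : group_set (N * M) by rewrite -eK groupP.
  have sMNM : M \subset N * M by apply: (mulG_subr NG M).
  have sNMG : N * M \subset G by rewrite mul_subG.
  case/maxgroupP: maxM => _ maxM'.
  apply/eqP; apply: contraR nNM => neq.
  have := maxM' (Group gNM); rewrite /= properEneq neq sNMG => /(_ isT sMNM) <-.
  exact: mulG_subl.
set W := Y :\ (M : {set gT}).
have sWX : W \subset X.
  apply/subsetP=> K; rewrite in_setD1 => /andP[nKM KY].
  by move: (subsetP (proper_sub pYZ) K KY); rewrite in_setU1 (negPf nKM).
have mW : forall K, K \in W -> maximal K G by move=> K /(subsetP sWX); apply: mX.
have sDW : D \subset famcap G W by apply: famcapS.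
have sWD : famcap G W \subset D.
  apply/subsetP=> x xW.
  have xG : x \in N * M by rewrite GNM; apply: (subsetP (famcap_subG G W) x xW).
  case/mulsgP: xG xW => n m nN mM -> xW.
  have nD : n \in D by apply: (subsetP (gcore_sub D G)).
  have mWx : m \in famcap G W.
    have -> : m = n^-1 * (n * m) by rewrite mulKg.
    apply: (famcapM mW _ xW); apply: (famcapV mW).
    exact: (subsetP sDW).
  have mY : m \in famcap G Y.
    case/famcapP: mWx => mG Hm; apply/famcapP; split=> // K KY.
    case: (eqVneq K (M : {set gT})) => [-> //|nKM]; apply: Hm; by rewrite in_setD1 nKM.
  have sZX : famcap G Z \subset D by apply: famcapS; rewrite subsetUr.
  have mD : m \in D by rewrite eY in mY; exact: (subsetP sZX m mY).
  exact: (famcapM mX nD mD).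
have eWD : famcap G W = D by apply/eqP; rewrite eqEsubset sWD sDW.
have eWX : W = X.
  apply/eqP; apply: contraT => neWX.
  by have := irrX W; rewrite properEneq neWX sWX eWD eqxx => /(_ isT).
have MnY : (M : {set gT}) \notin Y.
  apply: contraT => /negbNE MY; have := pYZ; rewrite properEneq => /andP[/eqP[]].
  apply/eqP; rewrite eqEsubset (proper_sub pYZ) /=.
  by rewrite /Z subUset sub1set MY -eWX /W subD1set.
have sYX : Y \subset X.
  by rewrite -eWX; apply/subsetP=> K KY; rewrite in_setD1 KY andbT; apply: contraNneq MnY => <-.
apply: (negP nNM); apply: sNM_of; apply: subset_trans (famcapS _ sYX) _.
rewrite eY; apply/subsetP=> x /famcapP[_]; apply; exact: setU11.
Qed.
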